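(* If $J$ is a subcomplex of a simplicial complex $K$ which is flag and full in $K$, then $J$ is a 3-convex subcomplex of $K'_J$. In particular, if $J$ is a full subcomplex of a flag complex $K$, then $J$ is 3-convex in $K'_J$.
   Context: $K'_J$ (barycentric subdivision of $K$ relative to $J$): vertices are vertices of $J$ and barycenters $b(\sigma)$ of simplices $\sigma$ of $K$ not in $J$; simplices are spanned by sets $\{v_1,\dots,v_q,b(\sigma_1),\dots,b(\sigma_p)\}$ with $v_1,\dots,v_q$ spanning a simplex $\tau$ of $J$ (possibly empty), $\sigma_i\not\subset J$, and $\tau\subset\sigma_1\subset\dots\subset\sigma_p$. A subcomplex $J\subset L$ is 3-convex if it is full and for any two vertices of $J$ at edge-path distance 2 in $L$, every edge path of length 2 in $L$ joining them lies in $J$. *)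

(* Defs.v *)
(* Abstract simplicial complexes on an arbitrary vertex type V:
   a simplex is a (finite, nonempty) set of vertices, represented as a
   predicate V -> Prop; a complex is a predicate on such sets. *)
From Stdlib Require Import List.

Definition finite_set {T : Type} (s : T -> Prop) : Prop :=
  exists l : list T, forall x, s x -> In x l.
Definition nonempty {T : Type} (s : T -> Prop) : Prop := exists x, s x.
Definition subset {T : Type} (s t : T -> Prop) : Prop := forall x, s x -> t x.
Definition single {T : Type} (v : T) : T -> Prop := fun x => x = v.
Definition pair {T : Type} (a b : T) : T -> Prop := fun x => x = a \/ x = b.

Definition is_complex {V : Type} (K : (V -> Prop) -> Prop) : Prop :=
  (forall s, K s -> finite_set s /\ nonempty s) /\
  (forall s t, K s -> subset t s -> nonempty t -> K t).

Definition subcomplex {V : Type} (J K : (V -> Prop) -> Prop) : Prop :=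
  is_complex J /\ (forall s, J s -> K s).

Definition full {V : Type} (L M : (V -> Prop) -> Prop) : Prop :=
  forall s, L s -> (forall v, s v -> M (single v)) -> M s.

Definition flag {V : Type} (K : (V -> Prop) -> Prop) : Prop :=
  forall s, finite_set s -> nonempty s ->
    (forall v, s v -> K (single v)) ->
    (forall u v, s u -> s v -> u <> v -> K (pair u v)) -> K s.

Definition edge {W : Type} (L : (W -> Prop) -> Prop) (a b : W) : Prop :=
  a <> b /\ L (pair a b).
Definition dist2 {W : Type} (L : (W -> Prop) -> Prop) (a c : W) : Prop :=
  a <> c /\ ~ L (pair a c) /\ exists b, edge L a b /\ edge L b c.

Definition three_convex {W : Type} (L M : (W -> Prop) -> Prop) : Prop :=
  (forall s, M s -> L s) /\ full L M /\
  forall a c, M (single a) -> M (single c) -> dist2 L a c ->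
    forall b, edge L a b -> edge L b c -> M (pair a b) /\ M (pair b c).

(* Barycentric subdivision K'_J of K relative to J.  Vertices: inl v for
   vertices v of J, and inr sigma standing for the barycenter b(sigma) of a
   simplex sigma of K not in J. *)
Definition rel_bsd {V : Type} (K J : (V -> Prop) -> Prop)
  : ((V + (V -> Prop)) -> Prop) -> Prop :=
  fun S =>
    finite_set S /\ nonempty S /\
    (~ nonempty (fun v => S (inl v)) \/ J (fun v => S (inl v))) /\
    (forall sigma, S (inr sigma) ->
        K sigma /\ ~ J sigma /\ subset (fun v => S (inl v)) sigma) /\
    (forall s1 s2, S (inr s1) -> S (inr s2) -> subset s1 s2 \/ subset s2 s1).

Definition inl_image {V : Type} (J : (V -> Prop) -> Prop)
  : ((V + (V -> Prop)) -> Prop) -> Prop :=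
  fun S => exists tau, J tau /\
    forall x, S x <-> exists v, tau v /\ x = inl v.

(* Main.v *)
Require Import Defs.
From Stdlib Require Import List FunctionalExtensionality PropExtensionality.

Lemma set_ext {T : Type} (s t : T -> Prop) : (forall x, s x <-> t x) -> s = t.
Proof.
  intro H; apply functional_extensionality; intro x; apply propositional_extensionality; auto.
Qed.

Section S.
Variables (V : Type) (K J : (V -> Prop) -> Prop).

Lemma all_inl (S : (V + (V -> Prop)) -> Prop) :
  rel_bsd K J S -> (forall y, S y -> exists v, y = inl v) -> inl_image J S.
Proof.
  intros [Hf [[x Hx] [Hd _]]] Hall.
  exists (fun v => S (inl v)). split.
  - destruct Hd as [Hd|Hd]; [|exact Hd]. exfalso; apply Hd.
    destruct (Hall x Hx) as [v ->]. exists v; exact Hx.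
  - intro y; split.
    + intro Hy. destruct (Hall y Hy) as [v ->]. eauto.
    + intros [v [Hv ->]]; exact Hv.
Qed.

Lemma single_inl (a : V + (V -> Prop)) :
  inl_image J (single a) -> exists u, a = inl u /\ J (single u).
Proof.
  intros [tau [Ht H]].
  destruct (proj1 (H a) eq_refl) as [u [Hu Ha]].
  exists u; split; auto.
  replace (single u) with tau; auto.
  apply set_ext; intro x; split.
  - intro Hx. pose proof (proj2 (H (inl x)) (ex_intro _ x (conj Hx eq_refl))) as e.
    unfold single in *. rewrite Ha in e. injection e; auto.
  - intro e; unfold single in e; subst; auto.
Qed.

Lemma core (HK : is_complex K) (HJ : subcomplex J K) :
  full K J -> three_convex (rel_bsd K J) (inl_image J).
Proof.
  intro Hfull. split; [|split].
  - intros S [tau [Ht HS]].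
    assert (E : (fun v => S (inl v)) = tau).
    { apply set_ext; intro v; split.
      - intro Hv. destruct (proj1 (HS _) Hv) as [v' [Hv' e]]. injection e; intros; subst; auto.
      - intro Hv. apply HS; eauto. }
    destruct (proj1 (proj1 HJ) tau Ht) as [[l Hl] [v0 Hv0]].
    split; [|split; [|split; [|split]]].
    + exists (map inl l). intros x Hx. destruct (proj1 (HS x) Hx) as [v [Hv ->]].
      apply in_map; auto.
    + exists (inl v0). apply HS; eauto.
    + right. rewrite E; auto.
    + intros sigma Hs. destruct (proj1 (HS _) Hs) as [v [_ e]]; discriminate.
    + intros s1 s2 Hs. destruct (proj1 (HS _) Hs) as [v [_ e]]; discriminate.
  - intros S HS Hv. apply all_inl; auto.
    intros y Hy. destruct (single_inl y (Hv y Hy)) as [u [-> _]]; eauto.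
  - intros a c Ha Hc [Hac [HnL _]] b [Hab HLab] [Hbc HLbc].
    destruct (single_inl a Ha) as [u [-> Ju]].
    destruct (single_inl c Hc) as [w [-> Jw]].
    destruct b as [x | sigma].
    + split; apply all_inl; auto; intros y [-> | ->]; eauto.
    + exfalso. apply HnL.
      destruct HLab as [_ [_ [_ [H1 _]]]].
      destruct HLbc as [_ [_ [_ [H2 _]]]].
      destruct (H1 sigma (or_intror eq_refl)) as [Ks [_ Su]].
      destruct (H2 sigma (or_introl eq_refl)) as [_ [_ Sw]].
      assert (Kuw : K (pair u w)).
      { apply (proj2 HK sigma); auto.
        - intros z [-> | ->]; [apply Su; left | apply Sw; right]; auto.
        - exists u; left; auto. }
      assert (Juw : J (pair u w)).
      { apply Hfull; auto. intros v [-> | ->]; auto. }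
      split; [|split; [|split; [|split]]].
      * exists (inl u :: inl w :: nil). intros z [-> | ->]; simpl; auto.
      * exists (inl u); left; auto.
      * right. replace (fun v => pair (inl u) (inl w) (@inl V (V -> Prop) v)) with (pair u w); auto.
        apply set_ext; intro v; unfold pair; split; intros [e|e];
          (subst; auto) || (injection e; auto).
      * intros s [e|e]; discriminate.
      * intros s1 s2 [e|e]; discriminate.
Qed.
End S.

Theorem lemma4p5 (V : Type) (K J : (V -> Prop) -> Prop)
  (HK : is_complex K) (HJ : subcomplex J K) :
  (flag J -> full K J -> three_convex (rel_bsd K J) (inl_image J)) /\
  (flag K -> full K J -> three_convex (rel_bsd K J) (inl_image J)).
Proof.
  split; intros _; apply core; auto.
Qed.
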